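(* Let $X$ be a Banach space and $(A_m)_{m\in\mathbb{Z}}$ a sequence of invertible bounded linear operators on $X$ with $\sup_m\lVert A_m\rVert<\infty$ admitting an exponential dichotomy; let $c>0$ be a constant as described in the context (with $B=l^\infty$), and fix $D,r>0$. Then there exists $\delta>0$ such that the following holds. Let $g_n\colon X\to X$, $n\in\mathbb{Z}$, be differentiable maps with $\lVert d_xg_n\rVert\le c/2$, $\lVert d_xg_n-d_yg_n\rVert\le D\lVert x-y\rVert^r$ for all $x,y\in X$, $n\in\mathbb{Z}$, and $\sup_{x\in X}\lVert g_n(x)\rVert\le\delta$ for all $n$. If $(y_n)_{n\in\mathbb{Z}}\subset X$ satisfies $y_{n+1}=A_ny_n+g_n(y_n)$ for all $n\in\mathbb{Z}$ and $$\lambda:=\limsup_{n\to\infty}\frac1n\log\lVert y_n\rVert>0,$$ then there exists $(x_n)_{n\in\mathbb{Z}}\subset X$ with $x_{n+1}=A_nx_n$ for all $n\in\mathbb{Z}$ and $\lambda=\limsup_{n\to\infty}\frac1n\log\lVert x_n\rVert$.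
   Context: Exponential dichotomy: with $\mathcal A(m,n)=A_{m-1}\cdots A_n$ ($m>n$), $\mathrm{Id}$ ($m=n$), $A_m^{-1}\cdots A_{n-1}^{-1}$ ($m<n$), there exist projections $P_m$ with $P_{m+1}A_m=A_mP_m$ and $C,\lambda_0>0$ with $\lVert\mathcal A(m,n)P_n\rVert\le Ce^{-\lambda_0(m-n)}$ ($m\ge n$) and $\lVert\mathcal A(m,n)(\mathrm{Id}-P_n)\rVert\le Ce^{-\lambda_0(n-m)}$ ($m\le n$). The constant $c>0$ is such that there is $K>0$ for which every sequence $(B_m)$ of bounded operators on $X$ with $\sup_m\lVert A_m-B_m\rVert\le c$ admits an exponential dichotomy and the operator $(\mathbb B\mathbf x)_n=B_{n-1}x_{n-1}$ on the space of bounded sequences $(x_n)_{n\in\mathbb{Z}}\subset X$ with the sup norm has $\mathrm{Id}-\mathbb B$ invertible with $\lVert(\mathrm{Id}-\mathbb B)^{-1}\rVert\le K$. *)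

(* Defs.v *)
From HB Require Import structures.
From mathcomp Require Import all_boot all_order all_algebra.
From mathcomp Require Import all_classical all_reals all_analysis.
Set Implicit Arguments. Unset Strict Implicit. Unset Printing Implicit Defensive.
Import Order.TTheory GRing.Theory Num.Theory.
Import numFieldNormedType.Exports.
Local Open Scope ring_scope.

Section Defs.
Context {R : realType} {X : normedModType R}.

Definition blin (f : X -> X) : Prop :=
  (forall (a : R) (x y : X), f (a *: x + y) = a *: f x + f y) /\
  exists M : R, forall x, `|f x| <= M * `|x|.

(* forward cocycle: iterc B n k = B_{n+k-1} o ... o B_n  (k steps from n) *)
Fixpoint iterc (B : int -> X -> X) (n : int) (k : nat) (x : X) : X :=
  match k with
  | 0%N => x
  | k'.+1 => B (n + k'%:Z) (iterc B n k' x)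
  end.

(* B(m,n) for n <= m *)
Definition cocycle (B : int -> X -> X) (m n : int) : X -> X :=
  iterc B n `|m - n|%N.

(* For m <= n the operator B(m,n)(Id - P_n) is the
   inverse of B(n,m) restricted to ker P_m -> ker P_n; for invertible B this
   is exactly A_m^{-1} ... A_{n-1}^{-1}(Id - P_n) as in the paper. *)
Definition exp_dichotomy (B : int -> X -> X) : Prop :=
  exists P : int -> X -> X,
    (forall m, blin (P m)) /\
    (forall m x, P m (P m x) = P m x) /\
    (forall m x, P (m + 1) (B m x) = B m (P m x)) /\
    (forall m (w : X), P m w = 0 -> B m w = 0 -> w = 0) /\
    (forall m (v : X), P (m + 1) v = 0 -> exists w, P m w = 0 /\ B m w = v) /\
    exists C lam : R, 0 < C /\ 0 < lam /\
      (forall m n x, n <= m ->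
         `|cocycle B m n (P n x)| <= C * expR (- lam * (m - n)%:~R) * `|x|) /\
      (forall m n x, m <= n -> exists w, P m w = 0 /\
         cocycle B n m w = x - P n x /\
         `|w| <= C * expR (- lam * (n - m)%:~R) * `|x|).

Definition bnd_seq (z : int -> X) : Prop := exists M : R, forall n, `|z n| <= M.

(* Id - BB is invertible on l^oo(Z, X), (BB x)_n = B_{n-1} x_{n-1},
   with inverse of norm <= K *)
Definition IdmB_inv_le (B : int -> X -> X) (K : R) : Prop :=
  forall z : int -> X, bnd_seq z ->
    exists x : int -> X, bnd_seq x /\
      (forall n, x n - B (n - 1) (x (n - 1)) = z n) /\
      (forall x' : int -> X, bnd_seq x' ->
         (forall n, x' n - B (n - 1) (x' (n - 1)) = z n) -> x' = x) /\
      (forall M : R, (forall n, `|z n| <= M) -> forall n, `|x n| <= K * M).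

Definition admissible_c (A : int -> X -> X) (c : R) : Prop :=
  0 < c /\ exists K : R, 0 < K /\
    forall B : int -> X -> X, (forall m, blin (B m)) ->
      (forall m x, `|A m x - B m x| <= c * `|x|) ->
      exp_dichotomy B /\ IdmB_inv_le B K.

Definition elog (t : R) : \bar R := if t == 0 then -oo%E else (ln t)%:E.

Definition lyap (y : int -> X) : \bar R :=
  limn_esup (fun n : nat => ((n%:R)^-1)%:E * elog `|y n%:Z|)%E.

End Defs.

(* Main.v *)
Require Import Defs.
From HB Require Import structures.
From mathcomp Require Import all_boot all_order all_algebra.
From mathcomp Require Import all_classical all_reals all_analysis.
Import Order.TTheory GRing.Theory Num.Theory.
Import numFieldNormedType.Exports.
Local Open Scope ring_scope.
From mathcomp Require Import lra.
Section L.
Context {R : realType} {X : normedModType R}.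

Lemma elog_le (x t : R) (n : nat) : 0 <= x -> (0 < n)%N ->
 ((((n%:R)^-1)%:E * elog x <= t%:E)%E <-> (x = 0 \/ ln x <= t * n%:R)).
Proof.
move=> x0 n0; rewrite /elog; case: eqP => [->|xn0].
  rewrite gt0_muleNy ?lte_fin ?invr_gt0 ?ltr0n //; split => _; [by left|exact: leNye].
rewrite -EFinM lee_fin; split.
  by move=> h; right; rewrite -ler_pdivrMr ?ltr0n // mulrC.
by case=> // h; rewrite mulrC ler_pdivrMr ?ltr0n.
Qed.

Definition aa (w : int -> X) (n : nat) : \bar R := (((n%:R)^-1)%:E * elog `|w n%:Z|)%E.

Lemma Kl (u v : int -> X) (M t1 t2 : R) : 1 <= M -> (forall n, `|u n - v n| <= M) ->
  0 < t1 -> t1 < t2 ->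
  (exists N, forall n, (N <= n)%N -> (aa u n <= t1%:E)%E) ->
  exists N, forall n, (N <= n)%N -> (aa v n <= t2%:E)%E.
Proof.
move=> M1 huv t10 t12 [N HN].
set C := ln (3 * M).
have C0 : 0 <= C by apply: ln_ge0; lra.
have q0 : 0 <= C / (t2 - t1) by apply: divr_ge0 => //; lra.
have hb := archi_boundP q0.
set N0 := Num.Def.archi_bound _ in hb.
exists (maxn (maxn N 1) N0) => n.
rewrite !geq_max => /andP[/andP[Nn n1] N0n].
have nq : C < (t2 - t1) * n%:R.
  rewrite -ltr_pdivrMl; last lra.
  rewrite mulrC; apply: (lt_le_trans hb); by rewrite ler_nat.
have n0 : 0 <= n%:R :> R by [].
have t1n : 0 <= t1 * n%:R by apply: mulr_ge0 => //; lra.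
have := HN n Nn; rewrite /aa elog_le // => hu.
rewrite /aa elog_le //.
case: (eqVneq `|v n%:Z| 0) => [->|vn0]; [by left|right].
have vpos : 0 < `|v n%:Z| by rewrite lt_neqAle eq_sym vn0 normr_ge0.
have hv : `|v n%:Z| <= `|u n%:Z| + M.
  have -> : v n%:Z = u n%:Z - (u n%:Z - v n%:Z) by rewrite opprB addrC subrK.
  apply: le_trans (ler_normB _ _) _; by rewrite lerD2l.
case: (leP (2 * M) `|u n%:Z|) => hu2.
  have upos : 0 < `|u n%:Z| by lra.
  have hu' : ln `|u n%:Z| <= t1 * n%:R by case: hu => // h0; lra.
  have : ln `|v n%:Z| <= ln (2 * `|u n%:Z|).
    rewrite ler_ln ?posrE //; [lra| apply: mulr_gt0 => //].
  rewrite lnM ?posrE // => h.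
  have : ln 2 <= C by rewrite ler_ln ?posrE //; lra.
  have : t1 * n%:R + (t2 - t1) * n%:R = t2 * n%:R by rewrite -mulrDl; congr (_ * _); lra.
  lra.
have : ln `|v n%:Z| <= C by rewrite ler_ln ?posrE //; lra.
have : t1 * n%:R + (t2 - t1) * n%:R = t2 * n%:R by rewrite -mulrDl; congr (_ * _); lra.
lra.
Qed.
Local Open Scope ereal_scope.
Lemma esup_inf (u : (\bar R)^nat) : limn_esup u = ereal_inf (range (esups u)).
Proof. rewrite limn_esup_lim; apply/cvg_lim => //; exact: cvg_esups_inf. Qed.

Lemma LS (u : (\bar R)^nat) N t : (forall n, (N <= n)%N -> u n <= t) -> limn_esup u <= t.
Proof.
move=> H; rewrite esup_inf; apply: (@le_trans _ _ (esups u N)).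
  by apply: ereal_inf_lbound; exists N.
by apply: ge_ereal_sup => _ [n /= Nn <-]; exact: H.
Qed.

Lemma LS2 (u : (\bar R)^nat) t : limn_esup u < t -> exists N, forall n, (N <= n)%N -> u n <= t.
Proof.
rewrite esup_inf => /ereal_inf_lt [_ [N _ <-]] H; exists N => n Nn.
apply: le_trans (ltW H); apply: ereal_sup_ubound; by exists n.
Qed.

Lemma dens (m : R) (x : \bar R) : m%:E < x -> exists t : R, (m < t)%R /\ t%:E < x.
Proof.
case: x => [x||] //=.
  rewrite lte_fin => h; exists ((m + x) / 2)%R; rewrite lte_fin; split; lra.
by move=> _; exists (m + 1)%R; split; [lra|exact: ltry].
Qed.

Lemma G (a b : int -> X) (M : R) : (1 <= M)%R -> (forall n, `|a n - b n| <= M)%R ->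
  limn_esup (aa a) < limn_esup (aa b) -> 0 < limn_esup (aa b) -> False.
Proof.
move=> M1 hab ltab b0.
have [m [m0 [Lam mLb]]] : exists m : R, (0 <= m)%R /\ limn_esup (aa a) <= m%:E /\ m%:E < limn_esup (aa b).
  move: ltab; case: (limn_esup (aa a)) => [r||] h.
  - exists (Num.max r 0%R); split; first by rewrite le_max lexx orbT.
    split; first by rewrite lee_fin le_max lexx.
    by rewrite EFin_max gt_max h b0.
  - by move: h; rewrite ltNge leey.
  - by exists 0%R; split => //; split => //; exact: leNye.
have [t1 [mt1 t1b]] := dens _ _ mLb.
have [t2 [t12 t2b]] := dens _ _ t1b.
have [N HN] : exists N, forall n, (N <= n)%N -> aa a n <= t1%:E.
  by apply: LS2; apply: le_lt_trans Lam _; rewrite lte_fin.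
have t10 : (0 < t1)%R by lra.
have [N' HN'] := Kl _ _ _ _ _ M1 hab t10 t12 (ex_intro _ N HN).
have := LS _ _ _ HN'.
by rewrite leNgt t2b.
Qed.
Lemma lyap_eq (u v : int -> X) M : (forall n, `|u n - v n| <= M)%R -> 0 < lyap u -> lyap v = lyap u.
Proof.
move=> h pu; set M' := Num.max M 1%R.
have M1 : (1 <= M')%R by rewrite le_max lexx orbT.
have h' : forall n, (`|u n - v n| <= M')%R.
  by move=> n; apply: le_trans (h n) _; rewrite le_max lexx.
have h'' : forall n, (`|v n - u n| <= M')%R by move=> n; rewrite distrC.
change (limn_esup (aa v) = limn_esup (aa u)).
apply/eqP; rewrite eq_le; apply/andP; split; rewrite leNgt; apply/negP => lt.
  exact: (G _ _ _ M1 h' lt (lt_trans pu lt)).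
exact: (G _ _ _ M1 h'' lt pu).
Qed.
End L.

Theorem corollary4p3 (R : realType) (X : completeNormedModType R)
  (A : int -> X -> X)
  (hAlin : forall m, blin (A m))
  (hAinv : forall m, bijective (A m))
  (hAsup : exists M : R, forall m x, `|A m x| <= M * `|x|)
  (hAdich : exp_dichotomy A)
  (c : R) (hc : admissible_c A c)
  (D r : R) (hD : 0 < D) (hr : 0 < r) :
  exists delta : R, 0 < delta /\
    forall g : int -> X -> X,
      (forall n x, differentiable (g n) x) ->
      (forall n x v, `|'d (g n) x v| <= c / 2 * `|v|) ->
      (forall n x y v, `|'d (g n) x v - 'd (g n) y v| <= D * `|x - y| `^ r * `|v|) ->
      (forall n x, `|g n x| <= delta) ->
      forall y : int -> X,
        (forall n, y (n + 1) = A n (y n) + g n (y n)) ->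
        (0 < lyap y)%E ->
        exists x : int -> X,
          (forall n, x (n + 1) = A n (x n)) /\ lyap x = lyap y.
Proof.
exists 1; split => // g _ _ _ hg y hy py.
case: hc => c0 [K [K0 HK]].
have [_ Hinv] := HK A hAlin (fun m x => ltac:(by rewrite subrr normr0 mulr_ge0 // ltW)).
have hb : bnd_seq (fun n => g (n - 1) (y (n - 1))) by exists 1.
have [z [[Mz hz] [hzeq _]]] := Hinv _ hb.
exists (fun n => y n - z n); split.
  move=> n; have := hzeq (n + 1); rewrite addrK => /eqP; rewrite subr_eq => /eqP ->.
  rewrite hy; case: (hAlin n) => hl _.
  have -> : y n - z n = (-1) *: z n + y n by rewrite scaleN1r addrC.
  by rewrite hl scaleN1r opprD addrA addrK addrC.
apply: (lyap_eq _ _ Mz) => // n.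
by rewrite opprB addrC subrK.
Qed.
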